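(* Let $q$ be a prime power, $\ell\ge1$, $\beta\in\{1,-1\}\subseteq\mathbb{F}_q$ of multiplicative order $r$, assume $q\equiv 1\pmod{r\ell}$, and let $\omega\in\mathbb{F}_q$ be a primitive $r\ell$-th root of unity with $\omega^\ell=\beta$. For $0\le k\le \ell-1$ let $\eta_k(y)=\prod_{0\le j\le\ell-1,\,j\ne k}\frac{y-\omega^{1+jr}}{\omega^{1+kr}-\omega^{1+jr}}$ (a polynomial of degree $\ell-1$), and let $\eta_k^*(y)=y^{\ell-1}\eta_k(1/y)$ be its reciprocal polynomial. Then for each $k=0,1,\dots,\ell-1$ there is a constant $b_k\in\mathbb{F}_q^*$ such that $$\eta_k^*(y)=\begin{cases} b_k\,\eta_{\ell-2-k}(y) & \text{if } \beta=1,\\ b_k\,\eta_{\ell-1-k}(y) & \text{if } \beta=-1,\end{cases}$$ where subscripts are read modulo $\ell$. *)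

(* Defs.v *)
From mathcomp Require Import all_boot all_order all_algebra all_field.
Set Implicit Arguments. Unset Strict Implicit. Unset Printing Implicit Defensive.
Import GRing.Theory.
Local Open Scope ring_scope.

Definition eta (F : fieldType) (w : F) (r l k : nat) : {poly F} :=
  \prod_(j < l | j != k :> nat)
     (('X - (w ^+ (1 + j * r))%:P) * ((w ^+ (1 + k * r) - w ^+ (1 + j * r))^-1)%:P).

(* reciprocal polynomial of degree-bound n: y^n p(1/y), i.e. coefficients reversed *)
Definition recip (F : fieldType) (n : nat) (p : {poly F}) : {poly F} :=
  \poly_(i < n.+1) p`_(n - i).

(* Main.v *)
Require Import Defs.
From mathcomp Require Import all_boot all_order all_algebra all_field zify.
Set Implicit Arguments. Unset Strict Implicit. Unset Printing Implicit Defensive.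
Import GRing.Theory.
Local Open Scope ring_scope.

Definition eta' (F : fieldType) (x : nat -> F) (l k : nat) : {poly F} :=
  \prod_(j < l | j != k :> nat) (('X - (x j)%:P) * ((x k - x j)^-1)%:P).

Lemma recip_horner (F : fieldType) n (p : {poly F}) (z : F) :
  z != 0 -> (size p <= n.+1)%N -> (recip n p).[z] = z ^+ n * p.[z^-1].
Proof.
move=> z0 sp; rewrite /recip horner_poly (horner_coef_wide _ sp) mulr_sumr.
rewrite (reindex_inj rev_ord_inj) /=; apply: eq_bigr => i _.
have hi : (i <= n)%N by rewrite -ltnS.
rewrite subnS subSn // /= subKn // exprVn mulrCA; congr (_ * _).
have -> : z ^+ n = z ^+ (n - i) * z ^+ i by rewrite -exprD subnK.
by rewrite mulrK // unitfE expf_neq0.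
Qed.

Lemma eta'_horner (F : fieldType) (x : nat -> F) l k i :
  (forall a b, (a < l)%N -> (b < l)%N -> x a = x b -> a = b) ->
  (k < l)%N -> (i < l)%N -> (eta' x l k).[x i] = (i == k)%:R.
Proof.
move=> inj kl il; rewrite /eta' horner_prod.
case: eqP => [->|ik].
  apply: big1 => j jk; rewrite hornerM hornerXsubC hornerC mulfV //.
  by rewrite subr_eq0; apply/eqP => /(inj _ _ kl (ltn_ord j)) e; rewrite e eqxx in jk.
apply/eqP; apply/prodf_eq0; exists (Ordinal il) => /=; first by apply/eqP.
by rewrite hornerM hornerXsubC subrr mul0r.
Qed.

Lemma size_eta' (F : fieldType) (x : nat -> F) l k :
  (k < l)%N -> (size (eta' x l k) <= l)%N.
Proof.
move=> kl; rewrite /eta'.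
set P := [pred j : 'I_l | j != k :> nat].
apply: leq_trans (size_poly_prod_leq P _) _.
set f := (fun j : 'I_l => (('X - (x j)%:P) * ((x k - x j)^-1)%:P)%R).
have hs : (\sum_(i | P i) size (f i) <= #|P| * 2)%N.
  rewrite -sum1_card big_distrl /=; apply: leq_sum => i _.
  rewrite mul1n /f; apply: leq_trans (size_polyMleq _ _) _; rewrite size_XsubC.
  by move: (size_polyC_leq1 ((x k - x i)^-1)); case: size => [|[|]].
have hc : (#|P| < l)%N.
  have e := cardC P; rewrite card_ord in e.
  have h1 : (0 < #|[predC P]|)%N.
    by apply/card_gt0P; exists (Ordinal kl); rewrite !inE /= eqxx.
  rewrite -[X in (_ < X)%N]e -addn1 leq_add2l; exact: h1.
move: hs hc; rewrite /f. set S := (\sum_(_ | _) _)%N. set c := #|P|. lia.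
Qed.

Lemma key (F : fieldType) (x : nat -> F) l k m :
  (forall a b, (a < l)%N -> (b < l)%N -> x a = x b -> a = b) ->
  (forall i, (i < l)%N -> x i != 0) ->
  (forall i, (i < l)%N -> exists2 j, (j < l)%N & x i * x j = 1) ->
  (k < l)%N -> (m < l)%N -> x m * x k = 1 ->
  recip l.-1 (eta' x l k) = (x m ^+ l.-1) *: eta' x l m.
Proof.
move=> inj nz0 inv kl ml emk.
have l1 : l.-1.+1 = l by rewrite prednK // (leq_ltn_trans _ kl).
have invE : forall a b, x a * x b = 1 -> (a < l)%N -> x b = (x a)^-1.
  by move=> a b e al; rewrite -[x b](mulKf (nz0 _ al)) e mulr1.
apply/eqP; rewrite -subr_eq0; apply/negPn/negP => nz.
have := max_poly_roots nz (rs := [seq x i | i <- iota 0 l]).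
rewrite size_map size_iota map_inj_in_uniq ?iota_uniq; last first.
  by move=> a b; rewrite !mem_iota /= !add0n => al bl; apply: inj.
have -> : all (root (recip l.-1 (eta' x l k) - x m ^+ l.-1 *: eta' x l m))
      [seq x i | i <- iota 0 l].
  apply/allP => y /mapP [i]; rewrite mem_iota add0n /= => il ->.
  rewrite /root hornerD hornerN hornerZ recip_horner ?nz0 //; last first.
    by rewrite l1 size_eta'.
  have [j jl eij] := inv i il.
  rewrite -(invE _ _ eij il) !eta'_horner //.
  have -> : (j == k) = (i == m).
    have eji : x i = (x j)^-1 by apply: invE jl; rewrite mulrC.
    have ekm : x m = (x k)^-1 by apply: invE kl; rewrite mulrC.
    have ejk : x k = (x m)^-1 by apply: invE ml.
    have eij' : x j = (x i)^-1 by apply: invE il.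
    apply/eqP/eqP => e.
      by apply: inj => //; rewrite eji ekm e.
    by apply: inj => //; rewrite eij' ejk e.
  by case: (eqVneq i m) => [->|_]; rewrite ?mulr1 ?mulr0 subrr.
move=> /(_ isT isT); apply/negP; rewrite -leqNgt.
apply: leq_trans (size_polyD _ _) _; rewrite size_polyN geq_max; apply/andP; split.
  by rewrite /recip; apply: leq_trans (size_poly _ _) _; rewrite l1.
by apply: leq_trans (size_scale_leq _ _) _; exact: size_eta'.
Qed.

Lemma case_gen (F : fieldType) (w : F) r l k m (s : nat -> nat) :
 (r * l).-primitive_root w -> (0 < r)%N -> (k < l)%N -> (m < l)%N ->
 (forall a b, (a < l)%N -> (b < l)%N -> (1 + a * r == 1 + b * r %[mod r * l])%N -> a = b) ->
 (forall i, (i < l)%N -> (s i < l)%N /\ (1 + i * r + (1 + s i * r) == 0 %[mod r * l])%N) ->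
 (1 + m * r + (1 + k * r) == 0 %[mod r * l])%N ->
 recip l.-1 (eta w r l k) = ((w ^+ (1 + k * r))^-1 ^+ l.-1) *: eta w r l m.
Proof.
move=> pw r0 kl ml inj sP emk.
have l0 : (0 < l)%N by apply: leq_ltn_trans _ kl.
have w0 : w != 0.
  apply/eqP => w0; move: (prim_expr_order pw); rewrite w0 expr0n muln_eq0.
  by rewrite eqn0Ngt r0 eqn0Ngt l0 /= => /eqP; rewrite eq_sym oner_eq0.
have prod1 : forall a b, (a + b == 0 %[mod r * l])%N -> w ^+ a * w ^+ b = 1.
  by move=> a b e; rewrite -exprD -(expr0 w); apply/eqP; rewrite (eq_prim_root_expr pw).
set x := fun j : nat => w ^+ (1 + j * r).
have xnz : forall i, x i != 0 by move=> i; rewrite /x expf_neq0.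
have emk' : x m * x k = 1 by apply: prod1.
have -> : (w ^+ (1 + k * r))^-1 = x m.
  by rewrite -[x m](mulfK (xnz k)) emk' mul1r.
apply: (key (x := x)) => //.
- by move=> a b al bl /eqP; rewrite /x (eq_prim_root_expr pw) => e; apply: inj.
- move=> i il; have [sl e] := sP i il; exists (s i) => //; exact: prod1.
Qed.

Lemma modz (x n : nat) : x = n \/ x = (2 * n)%N -> (x == 0 %[mod n])%N.
Proof. by case=> ->; rewrite ?modnn ?modnMl mod0n. Qed.

Theorem lemma5 (F : finFieldType) (l r : nat) (beta w : F) :
  (1 <= l)%N ->
  (beta = 1 \/ beta = -1) ->
  r.-primitive_root beta ->
  #|F| = 1 %[mod r * l] ->
  (r * l).-primitive_root w ->
  w ^+ l = beta ->
  forall k : nat, (k < l)%N ->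
  exists b : F, b != 0 /\
    (r = 1%N -> recip l.-1 (eta w r l k) = b *: eta w r l ((l + l - 2 - k) %% l)) /\
    (r = 2%N -> recip l.-1 (eta w r l k) = b *: eta w r l ((l - 1 - k) %% l)).
Proof.
move=> l1 _ _ _ pw _ k kl.
have w0 : w != 0.
  apply/eqP => w0; move: (prim_expr_order pw); rewrite w0 expr0n.
  have := prim_order_gt0 pw; rewrite lt0n => /negbTE -> /eqP; rewrite eq_sym oner_eq0 //.
exists ((w ^+ (1 + k * r))^-1 ^+ l.-1); split.
  by rewrite expf_neq0 // invr_neq0 // expf_neq0.
split=> er; subst r.
- have mE : ((l + l - 2 - k) %% l = if (k.+2 <= l)%N then l - 2 - k else l - 1)%N.
    case: ifP => h.
      have -> : (l + l - 2 - k = l + (l - 2 - k))%N by lia.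
      by rewrite modnDl modn_small //; lia.
    by rewrite modn_small; lia.
  rewrite mE.
  apply: (case_gen (s := fun i => if (i.+2 <= l)%N then (l - 2 - i)%N else l.-1)) => //.
  + by case: ifP; lia.
  + move=> a b al bl; rewrite !muln1 mul1n eqn_modDl !modn_small // => /eqP //.
  + move=> i il; split; first by case: ifP; lia.
    rewrite !muln1 mul1n; apply: modz; case: ifP; lia.
  + rewrite !muln1 mul1n; apply: modz; case: ifP; lia.
- rewrite modn_small; last by lia.
  apply: (case_gen (s := fun i => (l - 1 - i)%N)) => //.
  + lia.
  + move=> a b al bl; rewrite eqn_modDl [(2 * l)%N]mulnC -!muln_modl eqn_pmul2r //.
    by rewrite !modn_small // => /eqP //.
  + move=> i il; split; first by lia.
    by apply: modz; lia.
  + by apply: modz; lia.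
Qed.
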